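(* Let $p$ be a prime and let $b>1$ be an integer which is not a power of $2$, with $p\nmid b$. Let $\operatorname{rad}(b)$ be the product of the distinct primes dividing $b$ and $\varphi$ Euler's totient function. (a) If $a,c$ are positive integers such that $c$ is a primitive divisor of $p^a-1$, $\varphi(\operatorname{rad}(b))\mid a$ and $\gcd\big(\tfrac{p^a-1}{c},b\big)=1$, then $g\big(\tfrac{p^{ab}-1}{bc},p^{ab}\big)=b\,g\big(\tfrac{p^a-1}{c},p^a\big)$. (b) In particular, writing $a_0=\varphi(\operatorname{rad}(b))$, if $c$ is a primitive divisor of $p^{a_0}-1$ with $\gcd\big(\tfrac{p^{a_0}-1}{c},b\big)=1$, then $$g\Big(\tfrac{p^{b a_0}-1}{bc},\,p^{b a_0}\Big)=b\,g\Big(\tfrac{p^{a_0}-1}{c},\,p^{a_0}\Big).$$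
   Context: For a prime power $q$ and a positive integer $k$, the Waring number $g(k,q)$ is the smallest $s$ (if it exists) such that every element of $\mathbb{F}_q$ is a sum of $s$ $k$-th powers of elements of $\mathbb{F}_q$. An integer $e$ is a primitive divisor of $p^a-1$ if $e\mid p^a-1$ and $e\nmid p^u-1$ for every $1\le u<a$. *)

(* Defs.v *)
From HB Require Import structures.
From mathcomp Require Import all_boot all_order all_algebra all_field.
From Stdlib Require Import ClassicalEpsilon.
Set Implicit Arguments. Unset Strict Implicit. Unset Printing Implicit Defensive.
Import GRing.Theory.

Definition sum_of_kpowers (F : finFieldType) (k s : nat) (x : F) : bool :=
  [exists f : {ffun 'I_s -> F}, x == (\sum_(i < s) f i ^+ k)%R].

Definition waring_ok (F : finFieldType) (k s : nat) : bool :=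
  [forall x : F, sum_of_kpowers k s x].

Definition waring_number (F : finFieldType) (k : nat) : option nat :=
  match excluded_middle_informative (exists s, waring_ok F k s) with
  | left H => Some (ex_minn H)
  | right _ => None
  end.

Definition radn (n : nat) : nat := \prod_(r <- primes n) r.

Definition primitive_divisor (p a e : nat) : Prop :=
  e %| p ^ a - 1 /\ forall u, 1 <= u < a -> ~~ (e %| p ^ u - 1).

(* Main.v *)
Require Import Defs.
From HB Require Import structures.
From mathcomp Require Import all_boot all_order all_algebra all_field.
From mathcomp Require Import all_solvable.
From mathcomp Require Import zify.
From Stdlib Require Import ArithRing ClassicalEpsilon.
Set Implicit Arguments. Unset Strict Implicit. Unset Printing Implicit Defensive.
Import GRing.Theory.

Fixpoint Sg (x n : nat) : nat := if n is n'.+1 then Sg x n' + x ^ n' else 0.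

Lemma Sg_geom y n : (y.+1)^n = 1 + y * Sg y.+1 n.
Proof. elim: n => [|n IH]; first by rewrite expn0 /= muln0.
rewrite /= expnS IH; nia. Qed.

Lemma Sg_add x m n : Sg x (m + n) = Sg x m + x^m * Sg x n.
Proof. elim: n => [|n IH]; first by rewrite addn0 /= muln0 addn0.
by rewrite addnS /= IH expnD mulnDr addnA. Qed.

Lemma Sg_mul x m n : Sg x (m * n) = Sg x m * Sg (x^m) n.
Proof. elim: n => [|n IH]; first by rewrite muln0 /= muln0.
by rewrite mulnSr Sg_add IH /= -expnM mulnDr [x ^ (m * n) * _]mulnC. Qed.

Lemma pow_expand r y i : exists t, (1 + r*y)^i = 1 + i*r*y + r^2*t.
Proof. elim: i => [|i [t IH]]; first by exists 0; rewrite expn0; lia.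
exists (i*y^2 + t + r*t*y); rewrite expnSr IH; nia. Qed.

Lemma Sg_expand r y n : exists T, Sg (1 + r*y) n = n + r*y*'C(n,2) + r^2 * T.
Proof. elim: n => [|n [T IH]]; first by exists 0; rewrite bin0n /=; lia.
have [t Ht] := pow_expand r y n.
exists (T + t); rewrite /= IH Ht binS bin1; nia. Qed.

Lemma dvd_pred_eq r x : 0 < x -> r %| x - 1 -> exists y, x = 1 + r * y.
Proof. move=> x0 /dvdnP [y Hy]; exists y; lia. Qed.

Lemma Sg_modr r x n : 0 < x -> r %| x - 1 -> exists T, Sg x n = n + r * T.
Proof. move=> x0 /(dvd_pred_eq x0) [y ->].
have [T ->] := Sg_expand r y n. exists (y * 'C(n,2) + r * T); nia. Qed.

Lemma Sg_r r x : prime r -> 0 < x -> r %| x - 1 -> (r = 2 -> 4 %| x - 1) ->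
  exists u, Sg x r = r * u /\ ~~ (r %| u).
Proof.
move=> pr x0 rx h4.
have r1 := prime_gt1 pr.
have [y Hy] := dvd_pred_eq x0 rx.
have [T HT] := Sg_expand r y r.
have [w Hw] : exists w, r * y * 'C(r, 2) = r^2 * w.
  have [r2|r2] := eqVneq r 2.
    subst r. have /dvdnP [z Hz]: 2 %| y.
      have := h4 erefl; rewrite Hy; move=> /dvdnP [z Hz]. apply/dvdnP; exists z. lia.
    exists z; rewrite bin2 /=; lia.
  have oddr : odd r by case: (boolP (odd r)) => // /(prime_oddPn pr) H; rewrite H eqxx in r2.
  have : r %| 'C(r, 2).
    by rewrite bin2odd // dvdn_mulr.
  move=> /dvdnP [z Hz]; exists (y * z); rewrite Hz; nia.
exists (1 + r * (w + T)); split.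
  rewrite Hy HT Hw; nia.
apply/negP => /dvdnP [z Hz].
  have : r %| 1 + r * (w+T) by rewrite Hz dvdn_mull.
  by rewrite dvdn_addl ?dvdn_mulr // dvdn1 => /eqP r1'; rewrite r1' in r1.
Qed.

Lemma Sg_pos x n : 0 < x -> 0 < n -> 0 < Sg x n.
Proof. by move=> x0; case: n => //= n _; rewrite addn_gt0 expn_gt0 x0 orbT. Qed.

Lemma coprime_by_primes m n : 0 < m ->
  (forall s, prime s -> s %| m -> s %| n -> False) -> coprime m n.
Proof.
move=> m0 H; rewrite /coprime; case: (ltngtP (gcdn m n) 1) => // hg.
  by move: hg; rewrite ltnS leqn0 => /eqP g0; move: (gcdn_gt0 m n); rewrite g0 m0.
exfalso; apply: (H (pdiv (gcdn m n))); first exact: pdiv_prime.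
  by apply: dvdn_trans (dvdn_gcdl m n); apply: pdiv_dvd.
by apply: dvdn_trans (dvdn_gcdr m n); apply: pdiv_dvd.
Qed.
Lemma pow_pred_dvd x r : 0 < x -> x - 1 %| x ^ r - 1.
Proof. move=> x0; have := Sg_geom (x.-1) r; rewrite prednK // => ->.
by rewrite addKn subn1 /= dvdn_mulr. Qed.

Lemma L1 b x : 0 < b -> 0 < x -> (forall r, prime r -> r %| b -> r %| x - 1) -> b %| Sg x b.
Proof.
elim/ltn_ind: b x => b IH x b0 x0 hb.
have [b1|b1] := leqP b 1.
  have -> : b = 1 by lia. by rewrite dvd1n.
set r := pdiv b.
have pr : prime r by apply: pdiv_prime.
have rb : r %| b by apply: pdiv_dvd.
have eb : b = r * (b %/ r) by rewrite mulnC divnK.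
have b'0 : 0 < b %/ r by rewrite divn_gt0 ?prime_gt0 // dvdn_leq.
rewrite {2}eb Sg_mul {1}eb; apply: dvdn_mul.
  have [T ->] := Sg_modr r x0 (hb r pr rb). by rewrite dvdn_addr ?dvdn_mulr.
apply: IH => //.
- by rewrite {2}eb ltn_Pmull // prime_gt1.
- by rewrite expn_gt0 x0.
- move=> s ps sb; apply: dvdn_trans (pow_pred_dvd r x0).
  by apply: hb => //; apply: dvdn_trans sb _; rewrite {2}eb dvdn_mull.
Qed.

Lemma L2 b x e : 0 < b -> 0 < x -> (forall r, prime r -> r %| b -> r %| x - 1) ->
  (2 %| b -> 4 %| x - 1) -> b %| Sg x e -> b %| e.
Proof.
elim/ltn_ind: b x e => b IH x e b0 x0 hb h4 hS.
have [b1|b1] := leqP b 1.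
  have -> : b = 1 by lia. by rewrite dvd1n.
set r := pdiv b.
have pr : prime r by apply: pdiv_prime.
have rb : r %| b by apply: pdiv_dvd.
have eb : b = r * (b %/ r) by rewrite mulnC divnK.
have b'0 : 0 < b %/ r by rewrite divn_gt0 ?prime_gt0 // dvdn_leq.
have re : r %| e.
  have := dvdn_trans rb hS; have [T ->] := Sg_modr e x0 (hb r pr rb).
  by rewrite dvdn_addl ?dvdn_mulr.
have ee : e = r * (e %/ r) by rewrite mulnC divnK.
move: hS; rewrite ee Sg_mul.
have [u [Hu nru]] := Sg_r pr x0 (hb r pr rb) (fun h : r = 2 => h4 (eq_ind r (fun z => z %| b) rb 2 h)).
rewrite Hu {1}eb -mulnA dvdn_pmul2l ?prime_gt0 // Gauss_dvdr; last first.
  apply: coprime_by_primes => //.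
  move=> s ps sb' su.
  have sb : s %| b by rewrite eb dvdn_mull.
  have [T HT] := Sg_modr r x0 (hb s ps sb).
  have : s %| r.
    have : s %| Sg x r by rewrite Hu dvdn_mull.
    by rewrite HT dvdn_addl ?dvdn_mulr.
  rewrite dvdn_prime2 // => /eqP srr; rewrite -srr in nru.
  by rewrite su in nru.
move=> hS'.
suff H : b %/ r %| e %/ r by rewrite -{1}(divnK rb) [r * _]mulnC dvdn_pmul2r ?prime_gt0.
apply: IH hS' => //.
- by rewrite {2}eb ltn_Pmull // prime_gt1.
- by rewrite expn_gt0 x0.
- move=> s ps sb; apply: dvdn_trans (pow_pred_dvd r x0).
  by apply: hb => //; apply: dvdn_trans sb _; rewrite {2}eb dvdn_mull.
- move=> h2; apply: dvdn_trans (pow_pred_dvd r x0).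
  by apply: h4; apply: dvdn_trans h2 _; rewrite {2}eb dvdn_mull.
Qed.

Lemma radn_gt0 b : 0 < radn b.
Proof.
rewrite /radn big_seq; apply: prodn_cond_gt0 => s.
by rewrite mem_primes => /andP [ps _]; apply: prime_gt0.
Qed.

Lemma radn_tot r b : 0 < b -> prime r -> r %| b -> r.-1 %| totient (radn b).
Proof.
move=> b0 pr rb.
have rrad : r %| radn b.
  by rewrite /radn (big_rem r) /= ?dvdn_mulr // mem_primes pr b0 rb.
rewrite totientE ?radn_gt0 // (big_rem r) /=; last by rewrite mem_primes pr radn_gt0 rrad.
by rewrite -mulnA dvdn_mulr.
Qed.

Lemma prime_qm1 p a r : prime p -> prime r -> p != r -> r.-1 %| a -> r %| p ^ a - 1.
Proof.
move=> pp pr npr /dvdnP [t ->].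
have cpr : coprime p r by rewrite prime_coprime // dvdn_prime2 // eq_sym.
have := Euler_exp_totient cpr; rewrite totient_prime // => H.
have H2 : p ^ (t * r.-1) %% r = 1.
  rewrite mulnC expnM -modnXm H modnXm exp1n modn_small //; exact: prime_gt1.
have pg : 0 < p ^ (t * r.-1) by rewrite expn_gt0 prime_gt0.
apply/dvdnP; exists (p ^ (t * r.-1) %/ r).
have := divn_eq (p ^ (t * r.-1)) r; rewrite H2; lia.
Qed.

Lemma not_pow2 b : 0 < b -> ~ (exists n, b = 2 ^ n) -> exists r, prime r /\ r %| b /\ r != 2.
Proof.
move=> b0 nb; apply: Classical_Prop.NNPP => H; apply: nb.
elim/ltn_ind: b b0 H => b IH b0 H.
have [b1|b1] := leqP b 1; first by exists 0; lia.
have pd : prime (pdiv b) by apply: pdiv_prime.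
have p2 : pdiv b = 2.
  apply/eqP; apply: Classical_Prop.NNPP => /negP ne; apply: H.
  by exists (pdiv b); split => //; split => //; apply: pdiv_dvd.
have eb : b = 2 * (b %/ 2) by rewrite mulnC divnK // -p2 pdiv_dvd.
have [n Hn] : exists n, b %/ 2 = 2 ^ n.
  apply: IH.
  - by rewrite ltn_Pdiv.
  - rewrite divn_gt0 //; lia.
  - move=> [r [pr [rb r2]]]; apply: H; exists r; split => //; split => //.
    by rewrite eb dvdn_mull.
by exists n.+1; rewrite eb Hn expnS.
Qed.

Lemma qm1_eq q n : 0 < q -> q ^ n - 1 = (q - 1) * Sg q n.
Proof. move=> q0; have := Sg_geom q.-1 n; rewrite prednK // => ->; by rewrite addKn subn1. Qed.

Section NT.
Variables (p b a c : nat).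
Hypotheses (hp : prime p) (hb : 1 < b) (hb2 : ~ (exists n, b = 2 ^ n)) (hpb : ~~ (p %| b))
  (a0 : 0 < a) (c0 : 0 < c) (hc : c %| p ^ a - 1) (htot : totient (radn b) %| a)
  (hcop : coprime ((p ^ a - 1) %/ c) b).

Let q := p ^ a.
Let b0 : 0 < b. Proof. lia. Qed.
Let q0 : 0 < q. Proof. by rewrite expn_gt0 prime_gt0. Qed.

Lemma hb_pr r : prime r -> r %| b -> r %| q - 1.
Proof.
move=> pr rb; apply: prime_qm1 => //.
  by apply/eqP => epr; move: hpb; rewrite epr rb.
exact: dvdn_trans (radn_tot b0 pr rb) htot.
Qed.

Lemma h4 : 2 %| b -> 4 %| q - 1.
Proof.
move=> b2.
have [r [pr [rb r2]]] := not_pow2 b0 hb2.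
have oddr : odd r by case: (boolP (odd r)) => // /(prime_oddPn pr) H; rewrite H eqxx in r2.
have a2 : 2 %| a.
  apply: dvdn_trans (dvdn_trans (radn_tot b0 pr rb) htot).
  by rewrite dvdn2; case: r oddr pr {rb r2} => //.
have p2 : p != 2 by apply/eqP => e; move: hpb; rewrite e b2.
have oddp : odd p by case: (boolP (odd p)) => // /(prime_oddPn hp) H; rewrite H eqxx in p2.
have [a' ea] : exists a', a = a' * 2 by apply/dvdnP.
have oddm : odd (p ^ a') by rewrite oddX oddp orbT.
rewrite /q ea expnM.
have := odd_double_half (p ^ a'); rewrite oddm.
move: (p ^ a') => m; set h := m./2 => Hm.
rewrite -Hm /= -muln2 expnS expn1.
have E : (1 + h*2)*(1+h*2) = 1 + h*(h+1)*4 by rewrite -!plusE -!multE; ring.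
by rewrite E addKn dvdn_mull.
Qed.

Lemma NT1 : b * c %| p ^ (a * b) - 1.
Proof.
have e1 : p ^ (a * b) - 1 = ((q - 1) %/ c) * c * Sg q b by rewrite expnM qm1_eq // divnK.
rewrite e1 -mulnA dvdn_mull // [c * _]mulnC dvdn_pmul2r // L1 //; apply: hb_pr.
Qed.

Lemma NT2 e : 0 < e -> e < b -> ~~ (b * c %| q ^ e - 1).
Proof.
move=> e0 eb; apply/negP.
have e1 : q ^ e - 1 = ((q - 1) %/ c) * c * Sg q e by rewrite qm1_eq // divnK.
rewrite e1 mulnAC dvdn_pmul2r //.
rewrite Gauss_dvdr; last by rewrite coprime_sym.
move=> /(L2 b0 q0 hb_pr h4) /dvdn_leq; lia.
Qed.

End NT.

Local Open Scope ring_scope.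

Lemma min_exists (P : nat -> Prop) : (exists n, P n) -> exists n, P n /\ forall m, P m -> (n <= m)%N.
Proof.
move=> [n Hn]; elim/ltn_ind: n Hn => n IH Hn.
case: (Classical_Prop.classic (exists m, (m < n)%N /\ P m)) => [[m [mn Pm]]|H].
  exact: IH mn Pm.
exists n; split => // m Pm; rewrite leqNgt; apply/negP => mn; apply: H; by exists m.
Qed.

Lemma embed_gen (K L M : fieldType) (iL : {rmorphism K -> L}) (iM : {rmorphism K -> M})
  (al : L) (P0 : {poly K}) (rs : seq M) :
  P0 != 0 -> root (map_poly iL P0) al ->
  map_poly iM P0 = \prod_(x <- rs) ('X - x%:P) ->
  (forall x : L, exists P : {poly K}, x = (map_poly iL P).[al]) ->
  exists psi : {rmorphism L -> M}, True.
Proof.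
move=> P00 rootP0 splitP0 gen.
pose Pr n := exists m : {poly K}, [/\ m != 0, root (map_poly iL m) al & size m = n].
have [n [[m [m0 rm sm]] minm]] : exists n, Pr n /\ forall k, Pr k -> (n <= k)%N.
  by apply: min_exists; exists (size P0), P0.
have dvdm : forall P, root (map_poly iL P) al -> m %| P.
  move=> P rP.
  have rmod : root (map_poly iL (P %% m)) al.
    move: rP; rewrite {1}(divp_eq P m) rmorphD rmorphM /root !hornerE.
    by move/eqP: rm => ->; rewrite mulr0 add0r.
  apply/modp_eq0P; apply/eqP; apply: contraT => nz.
  have := minm _ (ex_intro _ (P %% m) (And3 nz rmod erefl)).
  by rewrite -sm leqNgt ltn_modp m0.
have sm2 : (1 < size m)%N.
  rewrite ltnNge; apply/negP => /size1_polyC em.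
  move: rm m0; rewrite em map_polyC /root hornerC fmorph_eq0 polyC_eq0 => /eqP ->.
  by rewrite eqxx.
have : map_poly iM m %| \prod_(x <- rs) ('X - x%:P) by rewrite -splitP0 dvdp_map dvdm.
move=> /dvdp_prod_XsubC [msk Hmsk].
have [be rbe] : exists be, root (map_poly iM m) be.
  move: Hmsk; case E: (mask msk rs) => [|be l] Hmsk.
    by move: (eqp_size Hmsk); rewrite big_nil size_poly1 size_map_poly => sm1; rewrite sm1 in sm2.
  by exists be; rewrite (eqp_root Hmsk) root_prod_XsubC mem_head.
have wd : forall P Q, (map_poly iL P).[al] = (map_poly iL Q).[al] ->
    (map_poly iM P).[be] = (map_poly iM Q).[be].
  move=> P Q ePQ.
  have : root (map_poly iL (P - Q)) al by rewrite /root rmorphB !hornerE ePQ subrr.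
  move/dvdm/divpK => ePQ'.
  apply/eqP; rewrite -subr_eq0; apply/eqP.
  have -> : (map_poly iM P).[be] - (map_poly iM Q).[be] = (map_poly iM (P - Q)).[be].
    by rewrite rmorphB !hornerE.
  by rewrite -ePQ' rmorphM hornerM (eqP rbe) mulr0.
have gen' : forall x : L, exists P : {poly K}, x == (map_poly iL P).[al].
  by move=> x; have [P HP] := gen x; exists P; rewrite HP.
pose psi x := (map_poly iM (xchoose (gen' x))).[be].
have psiE : forall P, psi ((map_poly iL P).[al]) = (map_poly iM P).[be].
  by move=> P; apply: wd; rewrite -(eqP (xchooseP (gen' _))).
have psiA : zmod_morphism psi.
  move=> x y; have [Px ->] := gen x; have [Py ->] := gen y.
  have -> : (map_poly iL Px).[al] - (map_poly iL Py).[al] = (map_poly iL (Px - Py)).[al].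
    by rewrite rmorphB !hornerE.
  by rewrite !psiE rmorphB !hornerE.
have psiM : monoid_morphism psi.
  split.
    have -> : (1 : L) = (map_poly iL 1).[al] by rewrite rmorph1 hornerC.
    by rewrite psiE rmorph1 hornerC.
  move=> x y; have [Px ->] := gen x; have [Py ->] := gen y.
  have -> : (map_poly iL Px).[al] * (map_poly iL Py).[al] = (map_poly iL (Px * Py)).[al].
    by rewrite rmorphM !hornerE.
  by rewrite !psiE rmorphM !hornerE.
pose faM := GRing.isZmodMorphism.Build _ _ _ psiA.
pose fmM := GRing.isMonoidMorphism.Build _ _ _ psiM.
pose fRM : {rmorphism L -> M} := HB.pack psi faM fmM.
by exists fRM.
Qed.

Lemma expf_cardn (E : finFieldType) (x : E) n : x ^+ (#|E| ^ n) = x.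
Proof. elim: n => [|n IH]; first by rewrite expr1. by rewrite expnS exprM expf_card IH. Qed.

Lemma unit_pow (E : finFieldType) (x : E) : x != 0 -> x ^+ #|E|.-1 = 1.
Proof.
move=> x0; apply: (mulIf x0); rewrite mul1r -exprSr prednK ?expf_card //.
by apply: (leq_trans _ (finNzRing_gt1 E)).
Qed.

Lemma prim_exists (E : finFieldType) : exists al : E, (#|E|.-1).-primitive_root al.
Proof.
have : has (#|E|.-1).-primitive_root (enum (predC1 (0 : E))).
  apply: has_prim_root.
- by rewrite -ltnS prednK ?finNzRing_gt1 // (leq_trans _ (finNzRing_gt1 E)).
- by apply/allP => x; rewrite mem_enum /= => x0; rewrite unity_rootE unit_pow.
- exact: enum_uniq.
- by rewrite -cardE cardC1.
by case/hasP => al _ Hal; exists al.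
Qed.

Lemma Fp_morph (R : fieldType) p (pc : p \in [pchar R]) : exists f : {rmorphism 'F_p -> R}, True.
Proof.
pose f := fun a : 'F_p => (in_alg (pPrimeCharType pc) a : R).
have fA : zmod_morphism f by move=> x y; exact: (rmorphB (in_alg (pPrimeCharType pc)) x y).
have fM : monoid_morphism f.
  split; first exact: (rmorph1 (in_alg (pPrimeCharType pc))).
  by move=> x y; exact: (rmorphM (in_alg (pPrimeCharType pc)) x y).
pose faM := GRing.isZmodMorphism.Build _ _ _ fA.
pose fmM := GRing.isMonoidMorphism.Build _ _ _ fM.
pose fRM : {rmorphism 'F_p -> R} := HB.pack f faM fmM.
by exists fRM.
Qed.

Lemma embed_fin (E F : finFieldType) p a n : prime p -> #|E| = (p ^ a)%N -> #|F| = (p ^ (a * n))%N ->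
  exists psi : {rmorphism E -> F}, True.
Proof.
move=> pp cE cF.
have pcE : p \in [pchar E] by apply: card_finPcharP cE pp.
have pcF : p \in [pchar F] by apply: card_finPcharP cF pp.
have [iE _] := Fp_morph pcE.
have [iF _] := Fp_morph pcF.
have [al Hal] := prim_exists E.
pose P0 : {poly 'F_p} := 'X^#|F| - 'X.
have mP0 : map_poly iF P0 = \prod_(x <- enum F) ('X - x%:P).
  by rewrite rmorphB /= map_polyXn map_polyX finField_genPoly big_enum.
apply: (embed_gen (iL := iE) (P0 := P0) (al := al) _ _ mP0).
- apply/eqP => e0.
  have hm : \prod_(x <- enum F) ('X - x%:P) \is monic by apply: monic_prod_XsubC.
  by move: hm; rewrite -mP0 e0 rmorph0 => /monic_neq0; rewrite eqxx.
- rewrite /root /P0 rmorphB /= map_polyXn map_polyX !hornerE cF expnM -cE expf_cardn subrr //.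
move=> x; have [->|x0] := eqVneq x 0; first by exists 0; rewrite rmorph0 horner0.
have [i ->] := prim_rootP Hal (unit_pow x0).
by exists 'X^i; rewrite map_polyXn hornerXn.
Qed.

Local Open Scope ring_scope.

Definition rep (L : finFieldType) (kk n : nat) (x : L) :=
  exists l : seq L, (size l <= n)%N /\ x = \sum_(z <- l) z ^+ kk.

Lemma rep_add (L : finFieldType) kk m n (x y : L) :
  rep kk m x -> rep kk n y -> rep kk (m + n) (x + y).
Proof.
move=> [l [sl ->]] [l' [sl' ->]]; exists (l ++ l'); split.
  by rewrite size_cat leq_add.
by rewrite big_cat.
Qed.

Lemma rep_sum (L : finFieldType) kk t n (G : 'I_n -> L) :
  (forall j, rep kk t (G j)) -> rep kk (n * t) (\sum_(j < n) G j).
Proof.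
elim: n G => [|n IH] G HG.
  by rewrite big_ord0; exists [::]; rewrite big_nil.
rewrite big_ord_recr mulSn addnC; apply: rep_add => //.
by apply: IH => j.
Qed.

Lemma sum_of_kpowersP (L : finFieldType) kk n (x : L) :
  (0 < kk)%N -> sum_of_kpowers kk n x <-> rep kk n x.
Proof.
move=> kk0; split.
  case/existsP => f /eqP ->; exists [seq f i | i <- enum 'I_n]; split.
    by rewrite size_map size_enum_ord.
  by rewrite big_map big_enum.
move=> [l [sl ->]].
pose l' := l ++ nseq (n - size l) 0.
have sl' : size l' = n by rewrite size_cat size_nseq subnKC.
apply/existsP; exists [ffun i : 'I_n => nth 0 l' i]; apply/eqP.
have -> : \sum_(z <- l) z ^+ kk = \sum_(z <- l') z ^+ kk.
  rewrite big_cat /= [X in _ = _ + X]big1_seq ?addr0 // => z /andP [_].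
  by rewrite mem_nseq => /andP [_ /eqP ->]; rewrite expr0n (gtn_eqF kk0).
rewrite (big_nth 0) sl' big_mkord; apply: eq_bigr => i _; by rewrite ffunE.
Qed.

Lemma waring_okP (L : finFieldType) kk n :
  (0 < kk)%N -> waring_ok L kk n <-> forall x : L, rep kk n x.
Proof.
move=> kk0; rewrite /waring_ok; split => [/forallP H x | H].
  by apply/sum_of_kpowersP.
by apply/forallP => x; apply/sum_of_kpowersP.
Qed.

Lemma waring_numberS (L : finFieldType) kk m : waring_ok L kk m ->
  (forall s, waring_ok L kk s -> (m <= s)%N) -> waring_number L kk = Some m.
Proof.
move=> Hm minm; rewrite /waring_number.
case: excluded_middle_informative => [H|H]; last by exfalso; apply: H; exists m.
congr Some; case: ex_minnP => m' Hm' minm'; apply/eqP.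
by rewrite eqn_leq minm' // minm.
Qed.

Lemma waring_numberN (L : finFieldType) kk :
  (forall s, ~ waring_ok L kk s) -> waring_number L kk = None.
Proof.
move=> H; rewrite /waring_number.
by case: excluded_middle_informative => [[s Hs]|//]; exfalso; apply: (H s).
Qed.

Lemma sum_count (T : Type) n (J : T -> 'I_n) (l : seq T) :
  (\sum_(j < n) count (fun w => J w == j) l)%N = size l.
Proof.
elim: l => [|w l IH] /=; first by rewrite big1.
rewrite big_split /= IH (bigD1 (J w)) //= eqxx big1 ?add1n // => j.
by rewrite eq_sym => /negbTE ->.
Qed.

Section Main.
Variables (p a b c k k' : nat) (E F : finFieldType) (psi : {rmorphism E -> F}) (g : F) (al : E).
Let q := (p ^ a)%N.
Hypotheses (hp : prime p) (hE : #|E| = q) (hF : #|F| = (q ^ b)%N) (b0 : (0 < b)%N)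
  (hk : (q - 1 = k * c)%N) (hk' : (q ^ b - 1 = k' * (b * c))%N) (k0 : (0 < k)%N) (k'0 : (0 < k')%N)
  (c0 : (0 < c)%N)
  (NT2 : forall e, (0 < e)%N -> (e < b)%N -> ~~ (b * c %| q ^ e - 1)%N)
  (Hg : (#|F|.-1).-primitive_root g) (Hal : (#|E|.-1).-primitive_root al).

Let th := g ^+ k'.
Let ze := al ^+ k.

Lemma Fm1 : #|F|.-1 = (k' * (b * c))%N.
Proof. by rewrite hF -hk' subn1. Qed.
Lemma Em1 : #|E|.-1 = (k * c)%N.
Proof. by rewrite hE -hk subn1. Qed.

Lemma th_prim : (b * c).-primitive_root th.
Proof. have := exp_prim_root Hg k'; by rewrite Fm1 gcdnMr mulKn. Qed.

Lemma ze_prim : c.-primitive_root ze.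
Proof. have := exp_prim_root Hal k; by rewrite Em1 gcdnMr mulKn. Qed.

Lemma q_gt0 : (0 < q)%N. Proof. by rewrite expn_gt0 prime_gt0. Qed.

Lemma psi_fix (d : E) i : psi d ^+ (q ^ i) = psi d.
Proof. by rewrite -rmorphXn -hE expf_cardn. Qed.

Lemma pcF : p \in [pchar F].
Proof. by apply: (card_finPcharP (n := (a * b)%N)); rewrite // hF expnM. Qed.

Lemma frob_add i (x y : F) : (x + y) ^+ (q ^ i) = x ^+ (q ^ i) + y ^+ (q ^ i).
Proof. by apply: exprDn_pchar; rewrite -expnM pnatX pnatE // pcF. Qed.

Lemma frob_sum i (n : nat) (G : 'I_n -> F) : (\sum_(j < n) G j) ^+ (q ^ i) = \sum_(j < n) G j ^+ (q ^ i).
Proof.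
apply: (big_morph (fun x => x ^+ (q ^ i)) (frob_add i)).
by rewrite expr0n expn_eq0 (negbTE (lt0n_neq0 q_gt0)).
Qed.

Lemma cop_bcq : coprime (b * c) q.
Proof.
have : (b * c %| q ^ b - 1)%N by rewrite hk' dvdn_mull.
move=> H; apply: (coprime_dvdl H).
have q0 := q_gt0.
have : coprime (q ^ b - 1) (q ^ b - 1).+1 by apply: coprimenS.
rewrite subn1 prednK ?expn_gt0 ?q0 // ?prime_gt0 // => H2.
apply: coprime_dvdr H2; exact: dvdn_exp.
Qed.

Lemma Phi_inj (d : 'I_b -> E) : \sum_(j < b) psi (d j) * th ^+ j = 0 -> forall j, d j = 0.
Proof.
move=> H0.
pose dn (n : nat) := if insub n is Some o then d o else 0.
have dnE : forall j : 'I_b, dn j = d j by move=> j; rewrite /dn valK.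
pose P := \poly_(j < b) psi (dn j).
have rootP : forall i, (i < b)%N -> root P (th ^+ (q ^ i)).
  move=> i ib; rewrite /root horner_poly.
  have -> : \sum_(j < b) psi (dn j) * (th ^+ (q ^ i)) ^+ j
            = (\sum_(j < b) psi (d j) * th ^+ j) ^+ (q ^ i).
    rewrite frob_sum; apply: eq_bigr => j _.
    by rewrite dnE exprMn psi_fix exprAC.
  by rewrite H0 expr0n expn_eq0 (negbTE (lt0n_neq0 q_gt0)).
have P0 : P = 0.
  apply/eqP; apply: contraT => nP.
  have := max_poly_roots nP (rs := [seq th ^+ (q ^ i) | i <- iota 0 b]).
  rewrite size_map size_iota ltnNge size_poly /=.
  apply.
    by apply/allP => x /mapP [i]; rewrite mem_iota add0n => /andP [_ ib] ->; apply: rootP.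
  rewrite map_inj_in_uniq ?iota_uniq //.
  have key : forall i j, (i <= j < b)%N -> th ^+ (q ^ i) = th ^+ (q ^ j) -> i = j.
    move=> i j /andP [ij jb] /eqP; rewrite (eq_prim_root_expr th_prim) eq_sym eqn_mod_dvd; last first.
      by rewrite leq_pexp2l // q_gt0.
    rewrite -(subnKC ij) expnD.
    have -> : (q ^ i * q ^ (j - i) - q ^ i = q ^ i * (q ^ (j - i) - 1))%N by rewrite mulnBr muln1.
    rewrite Gauss_dvdr; last first.
      exact: coprimeXr cop_bcq.
    case: (posnP (j - i)) => [->|ji0]; first by rewrite addn0.
    by move=> H; move: (NT2 ji0 (leq_ltn_trans (leq_subr _ _) jb)); rewrite H.
  move=> i j; rewrite !mem_iota !add0n /= => ib jb e.
  have [ij|ji] := leqP i j; first by apply: key => //; rewrite ij jb.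
  by apply/esym/key; rewrite ?(ltnW ji) // ib.
move=> j; apply/eqP; rewrite -(fmorph_eq0 psi).
have := congr1 (fun Q : {poly F} => Q`_j) P0; rewrite coef_poly ltn_ord dnE coef0 => ->.
by rewrite eqxx.
Qed.

Lemma decD (w : F) : exists jh : 'I_b * E, w ^+ k' == th ^+ jh.1 * psi (jh.2 ^+ k).
Proof.
have [->|w0] := eqVneq w 0.
  exists (Ordinal b0, 0); rewrite /= !expr0n (gtn_eqF k0) (gtn_eqF k'0) !mulr0n rmorph0 mulr0.
  by rewrite eqxx.
have w1 : (w ^+ k') ^+ (b * c) = 1 by rewrite -exprM -Fm1 unit_pow.
have [i Hi] := prim_rootP th_prim w1.
have tb1 : (th ^+ b) ^+ c = 1 by rewrite -exprM prim_expr_order // th_prim.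
have pz : c.-primitive_root (psi ze) by rewrite fmorph_primitive_root ze_prim.
have [m Hm] := prim_rootP pz tb1.
exists (Ordinal (ltn_pmod i b0), al ^+ (m * (i %/ b))) => /=.
rewrite Hi {1}(divn_eq i b) exprD mulrC; apply/eqP; congr (_ * _).
rewrite mulnC exprM Hm -!rmorphXn; congr (psi _); rewrite /ze -!exprM.
by rewrite [in RHS]mulnC.
Qed.

Lemma decD' (j : nat) (h : E) : exists w : F, th ^+ j * psi (h ^+ k) == w ^+ k'.
Proof.
have [->|h0] := eqVneq h 0.
  by exists 0; rewrite !expr0n (gtn_eqF k0) (gtn_eqF k'0) !mulr0n rmorph0 mulr0.
have y1 : (th ^+ j * psi (h ^+ k)) ^+ (b * c) = 1.
  rewrite exprMn exprAC (prim_expr_order th_prim) expr1n mul1r.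
  by rewrite -rmorphXn -exprM [(b * c)%N]mulnC mulnA exprM -Em1 unit_pow // expr1n rmorph1.
have [i Hi] := prim_rootP th_prim y1.
by exists (g ^+ i); rewrite Hi /th exprAC.
Qed.

Lemma Phi_surj (x : F) : exists d : {ffun 'I_b -> E}, x = \sum_(j < b) psi (d j) * th ^+ j.
Proof.
pose Phi := fun d : {ffun 'I_b -> E} => \sum_(j < b) psi (d j) * th ^+ j.
have inj : injective Phi.
  move=> d1 d2 e; apply/ffunP => j; apply/eqP; rewrite -subr_eq0; apply/eqP.
  apply: (Phi_inj (d := fun j => d1 j - d2 j)).
  rewrite (eq_bigr (fun j => psi (d1 j) * th ^+ j - psi (d2 j) * th ^+ j)); last first.
    by move=> i _; rewrite rmorphB mulrBl.
  by rewrite sumrB; apply/eqP; rewrite subr_eq0; apply/eqP.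
have bij : bijective Phi by apply: (inj_card_bij inj); rewrite card_ffun card_ord hE hF.
by case: bij => Phi' _ K; exists (Phi' x); rewrite -/(Phi _) K.
Qed.


Lemma partA t : (forall y : E, rep k t y) -> forall x : F, rep k' (b * t) x.
Proof.
move=> H x; have [d ->] := Phi_surj x; apply: rep_sum => j.
have [l [sl ->]] := H (d j).
exists [seq xchoose (decD' j h) | h <- l]; split; first by rewrite size_map.
rewrite big_map rmorph_sum mulr_suml; apply: eq_bigr => h _.
by rewrite mulrC; apply/eqP; exact: (xchooseP (decD' j h)).
Qed.

Lemma partB s : (forall x : F, rep k' s x) -> forall y : E, rep k (s %/ b) y.
Proof.
move=> H y.
have [l [sl Hl]] := H (\sum_(j < b) psi y * th ^+ j).
pose J w := (xchoose (decD w)).1.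
pose Hh w := (xchoose (decD w)).2.
have HJ : forall w, w ^+ k' = th ^+ J w * psi (Hh w ^+ k).
  by move=> w; apply/eqP; exact: (xchooseP (decD w)).
pose e (j : 'I_b) := \sum_(w <- l | J w == j) Hh w ^+ k.
have Hsum : \sum_(w <- l) w ^+ k' = \sum_(j < b) psi (e j) * th ^+ j.
  rewrite (eq_bigr _ (fun w _ => HJ w)).
  have -> : \sum_(j < b) psi (e j) * th ^+ j =
      \sum_(j < b) \sum_(w <- l) (if J w == j then psi (Hh w ^+ k) * th ^+ j else 0).
    apply: eq_bigr => j _; rewrite rmorph_sum mulr_suml big_mkcond /=.
    by apply: eq_bigr => w _; case: ifP.
  rewrite exchange_big /=; apply: eq_bigr => w _.
  rewrite -big_mkcond /= (big_pred1 (J w)); first by rewrite mulrC.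
  by move=> j; rewrite /= eq_sym.
have He : forall j, e j = y.
  move=> j; apply/eqP; rewrite -subr_eq0; apply/eqP.
  apply: (Phi_inj (d := fun j => e j - y)).
  rewrite (eq_bigr (fun j => psi (e j) * th ^+ j - psi y * th ^+ j)); last first.
    by move=> i _; rewrite rmorphB mulrBl.
  by rewrite sumrB -Hsum -Hl subrr.
have : [exists j : 'I_b, (count (fun w => J w == j) l <= s %/ b)%N].
  apply: contraT => /existsPn Hn.
  have : (b * (s %/ b).+1 <= \sum_(j < b) count (fun w => J w == j) l)%N.
    rewrite -[X in (X * _)%N]card_ord -sum_nat_const; apply: leq_sum => j _.
    by rewrite ltnNge Hn.
  rewrite sum_count => H2.
  have := ltn_ceil s b0; rewrite mulnC => H3.
  have := leq_trans H2 sl; rewrite leqNgt H3 //.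
case/existsP => j Hj.
exists [seq Hh w | w <- l & J w == j]; split.
  by rewrite size_map size_filter.
by rewrite -(He j) big_map big_filter.
Qed.

Lemma main_eq : waring_number F k' = omap (muln b) (waring_number E k).
Proof.
case: (Classical_Prop.classic (exists t, waring_ok E k t)) => [[t Ht]|Hn].
  have [m [Hm minm]] := @min_exists (fun n => waring_ok E k n) (ex_intro _ t Ht).
  rewrite (waring_numberS Hm minm) /=.
  apply: waring_numberS.
    apply: (@waring_okP F k' (b * m) k'0).2; apply: partA.
    exact: ((@waring_okP E k m k0).1 Hm).
  move=> s Hs.
  have H2 := partB ((@waring_okP F k' s k'0).1 Hs).
  have := minm _ ((@waring_okP E k (s %/ b) k0).2 H2).
  by rewrite leq_divRL // mulnC.
rewrite (waring_numberN (L := E)) /=; last by move=> s Hs; apply: Hn; exists s.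
apply: waring_numberN => s Hs; apply: Hn; exists (s %/ b)%N.
apply: (@waring_okP E k (s %/ b) k0).2; apply: partB.
exact: ((@waring_okP F k' s k'0).1 Hs).
Qed.

End Main.

Local Close Scope ring_scope.

Theorem mainTheorem16 (p b : nat) (hp : prime p) (hb : 1 < b)
  (hb2 : ~ (exists n, b = 2 ^ n)) (hpb : ~~ (p %| b)) :
  (forall a c : nat, 0 < a -> 0 < c -> primitive_divisor p a c ->
     totient (radn b) %| a -> coprime ((p ^ a - 1) %/ c) b ->
     forall (E F : finFieldType), #|E| = p ^ a -> #|F| = p ^ (a * b) ->
       waring_number F ((p ^ (a * b) - 1) %/ (b * c))
       = omap (muln b) (waring_number E ((p ^ a - 1) %/ c)))
  /\
  (forall c : nat, 0 < c -> primitive_divisor p (totient (radn b)) c ->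
     coprime ((p ^ totient (radn b) - 1) %/ c) b ->
     forall (E F : finFieldType), #|E| = p ^ totient (radn b) ->
       #|F| = p ^ (b * totient (radn b)) ->
       waring_number F ((p ^ (b * totient (radn b)) - 1) %/ (b * c))
       = omap (muln b) (waring_number E ((p ^ totient (radn b) - 1) %/ c))).
Proof.
have partA : forall a c : nat, 0 < a -> 0 < c -> primitive_divisor p a c ->
     totient (radn b) %| a -> coprime ((p ^ a - 1) %/ c) b ->
     forall (E F : finFieldType), #|E| = p ^ a -> #|F| = p ^ (a * b) ->
       waring_number F ((p ^ (a * b) - 1) %/ (b * c))
       = omap (muln b) (waring_number E ((p ^ a - 1) %/ c)).
  move=> a c a0 c0 [hc _] htot hcop E F cE cF.
  have b0 : 0 < b by apply: ltnW.
  have p1 := prime_gt1 hp.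
  have q1 : 1 < p ^ a by rewrite -(expn0 p) ltn_exp2l.
  have Q1 : 1 < p ^ (a * b) by rewrite -(expn0 p) ltn_exp2l // muln_gt0 a0.
  have hk : p ^ a - 1 = (p ^ a - 1) %/ c * c by rewrite divnK.
  have hN1 := NT1 hp hb hpb a0 c0 hc htot hcop.
  have hk' : (p ^ a) ^ b - 1 = (p ^ (a * b) - 1) %/ (b * c) * (b * c) by rewrite divnK // -expnM.
  have k0 : 0 < (p ^ a - 1) %/ c.
    rewrite lt0n; apply/eqP => e0; move: hk; rewrite e0 mul0n; lia.
  have k'0 : 0 < (p ^ (a * b) - 1) %/ (b * c).
    rewrite lt0n; apply/eqP => e0; move: hk'; rewrite e0 mul0n -expnM; lia.
  have hF : #|F| = (p ^ a) ^ b by rewrite cF expnM.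
  have [psi _] := embed_fin hp cE cF.
  have [g Hg] := prim_exists F.
  have [al Hal] := prim_exists E.
  have NT2' := NT2 hp hb hb2 hpb a0 c0 hc htot hcop.
  exact: (main_eq psi hp cE hF b0 hk hk' k0 k'0 NT2' Hg Hal).
split => //.
move=> c c0 hpd hcop E F cE cF.
have a0 : 0 < totient (radn b) by rewrite totient_gt0 radn_gt0.
rewrite mulnC; apply: partA => //.
by rewrite mulnC.
Qed.
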